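(* Let $\boldsymbol{X}\in\mathcal{S}^{n\times n}$ have pairwise distinct eigenvalues, let $\delta'>0$, and let $\boldsymbol{X}=\boldsymbol{Q}_x\operatorname{Diag}(\boldsymbol{\lambda}(\boldsymbol{X}))\boldsymbol{Q}_x^\top$ with $\boldsymbol{Q}_x\in\mathcal{O}(n,n)$ be a spectral decomposition. Then there exists $\delta''>0$ such that $$\boldsymbol{B}(\boldsymbol{X},\delta'')\subset\boldsymbol{B}\big((\boldsymbol{Q}_x,\boldsymbol{\lambda}(\boldsymbol{X})),\delta'\big).$$
   Context: $\mathcal{S}^{n\times n}$ denotes the real symmetric $n\times n$ matrices, $\mathcal{O}(n,n)$ the real orthogonal $n\times n$ matrices, and $\boldsymbol{\lambda}(\boldsymbol{X})$ the vector of eigenvalues of $\boldsymbol{X}$ in nonincreasing order. Let $\mathbb{R}^n_{\geq}=\{\boldsymbol{x}\in\mathbb{R}^n: x_1\ge\cdots\ge x_n\}$. For $\boldsymbol{Q}\in\mathcal{O}(n,n)$, $\boldsymbol{\lambda}\in\mathbb{R}^n_\geq$ and $\delta>0$, $\boldsymbol{B}((\boldsymbol{Q},\boldsymbol{\lambda}),\delta):=\{\bar{\boldsymbol{Q}}\operatorname{Diag}(\bar{\boldsymbol{\lambda}})\bar{\boldsymbol{Q}}^\top : \|\bar{\boldsymbol{Q}}-\boldsymbol{Q}\|_F\le\delta,\ \|\bar{\boldsymbol{\lambda}}-\boldsymbol{\lambda}\|\le\delta,\ \bar{\boldsymbol{Q}}\in\mathcal{O}(n,n),\ \bar{\boldsymbol{\lambda}}\in\mathbb{R}^n_\geq\}$,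 and $\boldsymbol{B}(\boldsymbol{X},\delta):=\{\bar{\boldsymbol{X}}\in\mathcal{S}^{n\times n}:\|\bar{\boldsymbol{X}}-\boldsymbol{X}\|_F\le\delta\}$. *)

(* Defs.v *)
From HB Require Import structures.
From mathcomp Require Import all_boot all_order all_algebra.
From mathcomp Require Import reals.
Set Implicit Arguments. Unset Strict Implicit. Unset Printing Implicit Defensive.
Import Order.TTheory GRing.Theory Num.Theory.
Local Open Scope ring_scope.

Section Defs.
Variable R : realType.

Definition is_symm n (X : 'M[R]_n) : Prop := X^T = X.

Definition is_orth n (Q : 'M[R]_n) : Prop := Q *m Q^T = 1%:M /\ Q^T *m Q = 1%:M.

Definition frob m n (A : 'M[R]_(m, n)) : R :=
  Num.sqrt (\sum_(i < m) \sum_(j < n) A i j ^+ 2).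

Definition vnorm n (v : 'rV[R]_n) : R := Num.sqrt (\sum_(j < n) v 0 j ^+ 2).

Definition nonincr n (v : 'rV[R]_n) : Prop :=
  forall i j : 'I_n, (i <= j)%N -> v 0 j <= v 0 i.

Definition is_eigvals n (X : 'M[R]_n) (lam : 'rV[R]_n) : Prop :=
  nonincr lam /\ char_poly X = \prod_(i < n) ('X - (lam 0 i)%:P).

Definition ballQL n (Q : 'M[R]_n) (lam : 'rV[R]_n) (d : R) : 'M[R]_n -> Prop :=
  fun Y => exists (Qb : 'M[R]_n) (lb : 'rV[R]_n),
    [/\ frob (Qb - Q) <= d, vnorm (lb - lam) <= d, is_orth Qb, nonincr lb
      & Y = Qb *m diag_mx lb *m Qb^T].

Definition ballX n (X : 'M[R]_n) (d : R) : 'M[R]_n -> Prop :=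
  fun Y => is_symm Y /\ frob (Y - X) <= d.

End Defs.

(* Main.v *)
Require Import Defs.
From HB Require Import structures.
From mathcomp Require Import all_boot all_order all_algebra.
From mathcomp Require Import reals.
From mathcomp Require Import boolp classical_sets filter topology normedtype realfun derive.
From mathcomp Require Import ring lra.
Import Order.TTheory GRing.Theory Num.Theory.
Import numFieldNormedType.Exports.
Local Open Scope classical_set_scope.
Local Open Scope ring_scope.

Section Cvg.
Variable R : realType.
Context {T : Type} (F : set_system T) {FF : Filter F}.

Lemma cvg_sum_seq (I : Type) (r : seq I) (P : pred I) (f : I -> T -> R) (a : I -> R) :
  (forall i, f i x @[x --> F] --> a i) ->
  (\sum_(i <- r | P i) f i x) @[x --> F] --> \sum_(i <- r | P i) a i.
Proof.
move=> H; elim: r => [|i r IH].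
  rewrite big_nil; under eq_cvg do rewrite big_nil; exact: cvg_cst.
rewrite big_cons; under eq_cvg do rewrite big_cons.
case: (P i) => //; exact: cvgD.
Qed.

Lemma cvg_prod_seq (I : Type) (r : seq I) (P : pred I) (f : I -> T -> R) (a : I -> R) :
  (forall i, f i x @[x --> F] --> a i) ->
  (\prod_(i <- r | P i) f i x) @[x --> F] --> \prod_(i <- r | P i) a i.
Proof.
move=> H; elim: r => [|i r IH].
  rewrite big_nil; under eq_cvg do rewrite big_nil; exact: cvg_cst.
rewrite big_cons; under eq_cvg do rewrite big_cons.
case: (P i) => //; exact: cvgM.
Qed.

Definition mxcvg m k (A : T -> 'M[R]_(m, k)) (A0 : 'M[R]_(m, k)) :=
  forall (i : 'I_m) (j : 'I_k), (A x i j) @[x --> F] --> A0 i j.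

Arguments mxcvg {m k}.

Lemma mxcvg_cst m k (A0 : 'M[R]_(m, k)) : mxcvg (fun _ => A0) A0.
Proof. move=> i j; exact: cvg_cst. Qed.

Lemma mxcvg_add m k (A B : T -> 'M[R]_(m, k)) A0 B0 :
  mxcvg A A0 -> mxcvg B B0 -> mxcvg (fun x => A x + B x) (A0 + B0).
Proof.
move=> HA HB i j; rewrite mxE; under eq_cvg do rewrite mxE; exact: cvgD.
Qed.

Lemma mxcvg_opp m k (A : T -> 'M[R]_(m, k)) A0 :
  mxcvg A A0 -> mxcvg (fun x => - A x) (- A0).
Proof.
move=> HA i j; rewrite mxE; under eq_cvg do rewrite mxE; exact: cvgN.
Qed.

Lemma mxcvg_sub m k (A B : T -> 'M[R]_(m, k)) A0 B0 :
  mxcvg A A0 -> mxcvg B B0 -> mxcvg (fun x => A x - B x) (A0 - B0).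
Proof. by move=> HA HB; apply: mxcvg_add => //; apply: mxcvg_opp. Qed.

Lemma mxcvg_scale m k (c : T -> R) (c0 : R) (A : T -> 'M[R]_(m, k)) A0 :
  c x @[x --> F] --> c0 -> mxcvg A A0 -> mxcvg (fun x => c x *: A x) (c0 *: A0).
Proof.
move=> Hc HA i j; rewrite mxE; under eq_cvg do rewrite mxE; exact: cvgM.
Qed.

Lemma mxcvg_mul m k l (A : T -> 'M[R]_(m, k)) (B : T -> 'M[R]_(k, l)) A0 B0 :
  mxcvg A A0 -> mxcvg B B0 -> mxcvg (fun x => A x *m B x) (A0 *m B0).
Proof.
move=> HA HB i j; rewrite mxE; under eq_cvg do rewrite mxE.
apply: cvg_sum_seq => l'; exact: cvgM.
Qed.

Lemma mxcvg_scalar m (c : T -> R) (c0 : R) :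
  c x @[x --> F] --> c0 -> mxcvg (fun x => (c x)%:M : 'M[R]_m) c0%:M.
Proof.
move=> Hc; rewrite -scalemx1; under [X in mxcvg X _]funext do rewrite -scalemx1.
by apply: mxcvg_scale => //; apply: mxcvg_cst.
Qed.

Lemma mxcvg_prod m (I : Type) (r : seq I) (P : pred I) (f : I -> T -> 'M[R]_m.+1) a :
  (forall i, mxcvg (f i) (a i)) ->
  mxcvg (fun x => \prod_(i <- r | P i) f i x) (\prod_(i <- r | P i) a i).
Proof.
move=> H; elim: r => [|i r IH].
  rewrite big_nil; under [X in mxcvg X _]funext do rewrite big_nil; exact: mxcvg_cst.
rewrite big_cons; under [X in mxcvg X _]funext do rewrite big_cons.
case: (P i) => //; exact: mxcvg_mul.
Qed.

Lemma mxcvg_det m (A : T -> 'M[R]_m) A0 :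
  mxcvg A A0 -> (\det (A x)) @[x --> F] --> \det A0.
Proof.
move=> HA; rewrite /determinant.
apply: cvg_sum_seq => s; apply: cvgM; first exact: cvg_cst.
by apply: cvg_prod_seq => i; apply: HA.
Qed.

End Cvg.
Arguments mxcvg {R T} F {m k}.

Set Implicit Arguments. Unset Strict Implicit.

Section Alg.
Variable R : realType.
Variable n : nat.
Local Notation N := n.+1.
Variables (Qx : 'M[R]_N) (lam : 'rV[R]_N).

Definition qv i : 'cV[R]_N := col i Qx.
Definition Wf (Y : 'M[R]_N) (mu : 'rV[R]_N) i : 'cV[R]_N :=
  (\prod_(j | j != i) (Y - (mu 0 j)%:M)) *m qv i.
Definition sf Y mu i := \sum_k (Wf Y mu i k 0) ^+ 2.
Definition cc i := \prod_(j | j != i) (lam 0 i - lam 0 j).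
Definition Vf Y mu i := (Num.sg (cc i) / Num.sqrt (sf Y mu i)) *: Wf Y mu i.
Definition Qbf Y mu : 'M[R]_N := \matrix_(k, i) Vf Y mu i k 0.

Lemma eig_prod (Y : 'M[R]_N) (v : 'cV[R]_N) (l : R) (I : Type) (r : seq I) P (f : I -> R) :
  Y *m v = l *: v ->
  (\prod_(j <- r | P j) (Y - (f j)%:M)) *m v = (\prod_(j <- r | P j) (l - f j)) *: v.
Proof.
move=> Hv; elim: r => [|j r IH]; first by rewrite !big_nil mul1mx scale1r.
rewrite !big_cons; case: (P j) => //.
by rewrite -mulmxE -mulmxA IH -scalemxAr mulmxBl Hv mul_scalar_mx -scalerBl scalerA mulrC.
Qed.

Lemma char_fact (Y : 'M[R]_N) (mu : 'rV[R]_N) :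
  (forall i, (char_poly Y).[mu 0 i] = 0) -> injective (fun i => mu 0 i) ->
  char_poly Y = \prod_i ('X - (mu 0 i)%:P).
Proof.
move=> Hr Hinj.
have := @all_roots_prod_XsubC _ (char_poly Y) [seq mu 0 i | i <- enum 'I_N].
rewrite size_map size_enum_ord size_char_poly => /(_ erefl) ->.
- by rewrite (monicP (char_poly_monic Y)) scale1r big_map big_enum.
- by apply/allP => x /mapP [i _ ->]; apply/rootP/Hr.
- by rewrite uniq_rootsE map_inj_uniq ?enum_uniq.
Qed.

Lemma eigW (Y : 'M[R]_N) (mu : 'rV[R]_N) i :
  char_poly Y = \prod_i ('X - (mu 0 i)%:P) ->
  Y *m Wf Y mu i = mu 0 i *: Wf Y mu i.
Proof.
move=> Hf.
have H0 : (Y - (mu 0 i)%:M) * \prod_(j | j != i) (Y - (mu 0 j)%:M) = 0.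
  have := Cayley_Hamilton Y; rewrite Hf (bigD1 i) //= rmorphM rmorph_prod /=.
  rewrite rmorphB /= horner_mx_X horner_mx_C.
  by under eq_bigr do rewrite rmorphB /= horner_mx_X horner_mx_C.
move: H0; rewrite -mulmxE => H0.
have : (Y - (mu 0 i)%:M) *m Wf Y mu i = 0 by rewrite /Wf mulmxA H0 mul0mx.
by rewrite mulmxBl mul_scalar_mx => /eqP; rewrite subr_eq0 => /eqP.
Qed.


Lemma trZ m k (a : R) (A : 'M[R]_(m, k)) : (a *: A)^T = a *: A^T.
Proof. by apply/matrixP => i j; rewrite !mxE. Qed.

Lemma dotE (u v : 'cV[R]_N) : (u^T *m v) 0 0 = \sum_k u k 0 * v k 0.
Proof. by rewrite mxE; apply: eq_bigr => k _; rewrite mxE. Qed.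

Lemma good (Y : 'M[R]_N) (mu : 'rV[R]_N) :
  Y^T = Y -> (forall i, (char_poly Y).[mu 0 i] = 0) -> injective (fun i => mu 0 i) ->
  (forall i, 0 < sf Y mu i) -> (forall i, cc i != 0) ->
  (Qbf Y mu)^T *m Qbf Y mu = 1%:M /\ Y *m Qbf Y mu = Qbf Y mu *m diag_mx mu.
Proof.
move=> HY Hr Hinj Hs Hc.
have Hf := char_fact Hr Hinj.
have EV i : Y *m Vf Y mu i = mu 0 i *: Vf Y mu i.
  by rewrite /Vf -scalemxAr (eigW i Hf) !scalerA mulrC.
have Hcol i k : Qbf Y mu k i = Vf Y mu i k 0 by rewrite mxE.
split.
  apply/matrixP => i j; rewrite !mxE.
  have -> : \sum_k (Qbf Y mu)^T i k * Qbf Y mu k j = ((Vf Y mu i)^T *m Vf Y mu j) 0 0.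
    by rewrite dotE; apply: eq_bigr => k _; rewrite !mxE.
  have [<-|nij] := eqVneq i j.
    rewrite dotE.
    have -> : \sum_k Vf Y mu i k 0 * Vf Y mu i k 0 =
      (Num.sg (cc i) / Num.sqrt (sf Y mu i)) ^+ 2 * sf Y mu i.
      rewrite /sf mulr_sumr; apply: eq_bigr => k _; rewrite /Vf !mxE.
      by rewrite expr2 expr2; ring.
    rewrite expr_div_n sqr_sg (Hc i) sqr_sqrtr ?ltW // mul1r mulVf //.
    exact: lt0r_neq0.
  idtac.
  set d := (Vf Y mu i)^T *m Vf Y mu j.
  have E1 : (Vf Y mu i)^T *m (Y *m Vf Y mu j) = mu 0 j *: d by rewrite EV -scalemxAr.
  have E2 : (Vf Y mu i)^T *m (Y *m Vf Y mu j) = mu 0 i *: d.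
    rewrite mulmxA.
    have -> : (Vf Y mu i)^T *m Y = (Y *m Vf Y mu i)^T by rewrite trmx_mul HY.
    by rewrite EV trZ -scalemxAl.
  have : (mu 0 i - mu 0 j) *: d = 0 by rewrite scalerBl -E1 -E2 subrr.
  move/eqP; rewrite scaler_eq0 subr_eq0 => /orP [/eqP Hm|/eqP ->]; last by rewrite mxE.
  by move: nij; rewrite (Hinj _ _ Hm) eqxx.
apply/matrixP => k i; rewrite mul_mx_diag [RHS]mxE [Qbf Y mu k i]mxE.
have : (Y *m Vf Y mu i) k 0 = (mu 0 i *: Vf Y mu i) k 0 by rewrite EV.
rewrite [RHS]mxE mulrC => <-.
rewrite [LHS]mxE [RHS]mxE; apply: eq_bigr => l _; by rewrite [Qbf _ _ _ _]mxE.
Qed.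

End Alg.

Lemma frob_cvg (R : realType) (T : Type) (F : set_system T) (FF : Filter F) m k
  (A : T -> 'M[R]_(m, k)) A0 :
  mxcvg F A A0 -> (frob (A x)) @[x --> F] --> frob A0.
Proof.
move=> HA; rewrite /frob.
apply: (@cvg_comp _ _ _ (fun x => \sum_i \sum_j A x i j ^+ 2) Num.sqrt _
  (nbhs (\sum_i \sum_j A0 i j ^+ 2))); last exact: sqrt_continuous.
apply: cvg_sum_seq => i; apply: cvg_sum_seq => j.
rewrite expr2; under eq_cvg do rewrite expr2.
by apply: cvgM; apply: HA.
Qed.

Lemma frob0 (R : realType) m k : frob (0 : 'M[R]_(m, k)) = 0.
Proof.
rewrite /frob big1 ?sqrtr0 // => i _; rewrite big1 // => j _.
by rewrite mxE expr0n.
Qed.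

Lemma vnorm_frob (R : realType) k (v : 'rV[R]_k) : vnorm v = frob v.
Proof. by rewrite /vnorm /frob big_ord1. Qed.

Lemma frob_entry (R : realType) m k (A : 'M[R]_(m, k)) i j : `|A i j| <= frob A.
Proof.
rewrite /frob -(sqrtr_sqr (A i j)) ler_wsqrtr //.
rewrite (bigD1 i) //= (bigD1 j) //= -addrA lerDl.
apply: addr_ge0; first by apply: sumr_ge0 => l _; exact: sqr_ge0.
by apply: sumr_ge0 => l _; apply: sumr_ge0 => l' _; exact: sqr_ge0.
Qed.

Section Conv.
Variable R : realType.
Variable n : nat.
Local Notation N := n.+1.
Variables (X Qx : 'M[R]_N) (lam : 'rV[R]_N).
Hypothesis HQ : Qx^T *m Qx = 1%:M.
Hypothesis HX : X = Qx *m diag_mx lam *m Qx^T.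

Local Notation PT := ('M[R]_N * 'rV[R]_N)%type.
Local Notation Fp := (nbhs (X, lam) : set_system ('M[R]_N * 'rV[R]_N)).

Lemma Xq i : X *m qv Qx i = lam 0 i *: qv Qx i.
Proof.
have XQ : X *m Qx = Qx *m diag_mx lam by rewrite HX -!mulmxA HQ mulmx1.
apply/colP => k; rewrite [RHS]mxE.
have := congr1 (fun M : 'M[R]_N => M k i) XQ.
rewrite mul_mx_diag [in RHS]mxE mulrC /qv [col i Qx k 0]mxE => <-.
by rewrite !mxE; apply: eq_bigr => l _; rewrite !mxE.
Qed.

Lemma colnorm i : \sum_k (qv Qx i k 0) ^+ 2 = 1.
Proof.
have := congr1 (fun M : 'M[R]_N => M i i) HQ; rewrite !mxE eqxx /= => H.
transitivity (\sum_j Qx^T i j * Qx j i); last by rewrite H.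
by apply: eq_bigr => k _; rewrite !mxE expr2.
Qed.

Lemma cvg_fst_entry i j : (fun p : PT => p.1 i j) @ Fp --> X i j.
Proof.
apply: (@cvg_comp _ _ _ fst (fun M : 'M[R]_N => M i j) _ (nbhs X)).
  exact: cvg_fst.
exact: coord_continuous.
Qed.

Lemma cvg_snd_entry j : (fun p : PT => p.2 0 j) @ Fp --> lam 0 j.
Proof.
apply: (@cvg_comp _ _ _ snd (fun M : 'rV[R]_N => M 0 j) _ (nbhs lam)).
  exact: cvg_snd.
exact: coord_continuous.
Qed.

Lemma cvgW i : mxcvg Fp (fun p : PT => Wf Qx p.1 p.2 i) (cc lam i *: qv Qx i).
Proof.
have <- : Wf Qx X lam i = cc lam i *: qv Qx i by rewrite /Wf (eig_prod _ _ _ (Xq i)).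
apply: mxcvg_mul; last exact: mxcvg_cst.
apply: mxcvg_prod => j; apply: mxcvg_sub; first exact: cvg_fst_entry.
by apply: mxcvg_scalar; apply: cvg_snd_entry.
Qed.

Lemma cvgS i : (fun p : PT => sf Qx p.1 p.2 i) @ Fp --> cc lam i ^+ 2.
Proof.
have -> : cc lam i ^+ 2 = \sum_k ((cc lam i *: qv Qx i) k 0) ^+ 2.
  rewrite -[LHS]mulr1 -(colnorm i) mulr_sumr; apply: eq_bigr => k _.
  by rewrite /qv !mxE exprMn.
apply: cvg_sum_seq => k; rewrite expr2; under eq_cvg do rewrite expr2.
by apply: cvgM; apply: cvgW.
Qed.


Hypothesis Hd : forall i j : 'I_N, i != j -> lam 0 i != lam 0 j.

Lemma cc_neq0 i : cc lam i != 0.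
Proof.
apply/prodf_neq0 => j ji; rewrite subr_eq0; apply: Hd; by rewrite eq_sym.
Qed.

Lemma cvgV i : mxcvg Fp (fun p : PT => Vf Qx lam p.1 p.2 i) (qv Qx i).
Proof.
have Hc := cc_neq0 i.
have Hlim : (Num.sg (cc lam i) / Num.sqrt (cc lam i ^+ 2)) *: (cc lam i *: qv Qx i) = qv Qx i.
  by rewrite sqrtr_sqr scalerA mulrAC -normrEsg mulfV ?normr_eq0 // scale1r.
rewrite -Hlim; apply: mxcvg_scale; last exact: cvgW.
apply: cvgM; first exact: cvg_cst.
apply: cvgV; first by rewrite sqrtr_sqr normr_eq0.
apply: (@cvg_comp _ _ _ (fun p : PT => sf Qx p.1 p.2 i) Num.sqrt _ (nbhs (cc lam i ^+ 2))).
  exact: cvgS.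
exact: sqrt_continuous.
Qed.

Lemma cvgQb : mxcvg Fp (fun p : PT => Qbf Qx lam p.1 p.2) Qx.
Proof.
move=> k i; rewrite (_ : Qx k i = qv Qx i k 0); last by rewrite mxE.
under eq_cvg do rewrite mxE.
exact: cvgV.
Qed.


Lemma nearA (d' : R) : 0 < d' ->
  exists2 e : R, 0 < e & forall (Y : 'M[R]_N) (mu : 'rV[R]_N),
    (forall i j, `|X i j - Y i j| < e) -> (forall j, `|lam 0 j - mu 0 j| < e) ->
    [/\ forall i, 0 < sf Qx Y mu i, frob (Qbf Qx lam Y mu - Qx) < d'
      & vnorm (mu - lam) < d'].
Proof.
move=> d0.
have H1 : \forall p \near Fp, forall i, 0 < sf Qx p.1 p.2 i.
  apply: filter_forall => i.
  have hp : 0 < cc lam i ^+ 2 by rewrite lt_def sqr_ge0 sqrf_eq0 cc_neq0.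
  exact: (cvgr_gt _ (@cvgS i) _ hp).
have H2 : \forall p \near Fp, frob (Qbf Qx lam p.1 p.2 - Qx) < d'.
  apply: (cvgr_lt 0); last exact: d0.
  rewrite -(frob0 R N N) -(subrr Qx); apply: frob_cvg.
  by apply: mxcvg_sub; [exact: cvgQb | exact: mxcvg_cst].
have H3' : \forall p \near Fp, frob (p.2 - lam) < d'.
  apply: (cvgr_lt 0); last exact: d0.
  rewrite -(frob0 R 1 N) -(subrr lam); apply: frob_cvg.
  apply: mxcvg_sub; last exact: mxcvg_cst.
  by move=> i j; rewrite (ord1 i); exact: cvg_snd_entry.
have H3 : \forall p \near Fp, vnorm (p.2 - lam) < d'.
  by apply: filterS H3' => p; rewrite vnorm_frob.
have HH := @filterI _ (nbhs (X, lam)) (nbhs_filter (X, lam)) _ _ H1 (@filterI _ (nbhs (X, lam)) (nbhs_filter (X, lam)) _ _ H2 H3).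
have [e e0 He] := iffLR (nbhs_ballP (X, lam) _) HH.
exists e => // Y mu HY Hmu.
have [h1 [h2 h3]] : (forall i, 0 < sf Qx (Y, mu).1 (Y, mu).2 i) /\
   (frob (Qbf Qx lam (Y, mu).1 (Y, mu).2 - Qx) < d' /\ vnorm ((Y, mu).2 - lam) < d').
  apply: He; split; split => //.
  by move=> i j; rewrite (ord1 i); exact: Hmu.
by split.
Qed.

End Conv.

Lemma horner_char (R : realType) m (Y : 'M[R]_m) t : (char_poly Y).[t] = \det (t%:M - Y).
Proof.
rewrite /char_poly -horner_evalE -det_map_mx; congr (\det _).
by apply/matrixP => i j; rewrite !mxE /= horner_evalE hornerD hornerN hornerMn hornerX hornerC.
Qed.

Lemma pos_gap (R : realType) (d eta : R) : 0 < eta -> eta < `|d| -> 0 < (d - eta) * (d + eta).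
Proof.
move=> h0 h; have [dge|dlt] := lerP 0 d.
  by rewrite ger0_norm // in h; nra.
by rewrite ltr0_norm // in h; nra.
Qed.

Section StepB.
Variable R : realType.
Variable n : nat.
Local Notation N := n.+1.
Variables (X : 'M[R]_N) (lam : 'rV[R]_N).
Hypothesis HE : char_poly X = \prod_i ('X - (lam 0 i)%:P).

Lemma nearB (eta : R) : 0 < eta -> (forall i j, i != j -> eta < `|lam 0 i - lam 0 j|) ->
  \forall Y \near X, forall i,
    (char_poly Y).[lam 0 i - eta] * (char_poly Y).[lam 0 i + eta] < 0.
Proof.
move=> e0 He; apply: (@filter_forall _ _ _ (nbhs X) (nbhs_filter X)) => i.
have Hc t : (fun Y : 'M[R]_N => (char_poly Y).[t]) @ nbhs X --> (char_poly X).[t].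
  have -> : (fun Y : 'M[R]_N => (char_poly Y).[t]) = (fun Y => \det (t%:M - Y)).
    by apply: funext => Y; rewrite horner_char.
  rewrite horner_char; apply: (@mxcvg_det R _ (nbhs X) _ N (fun Y : 'M[R]_N => t%:M - Y)).
  apply: mxcvg_sub; first exact: mxcvg_cst.
  by move=> k l; exact: coord_continuous.
have Hlim : (char_poly X).[lam 0 i - eta] * (char_poly X).[lam 0 i + eta] < 0.
  rewrite HE !horner_prod -big_split /= (bigD1 i) //=.
  rewrite !hornerXsubC.
  have -> : (lam 0 i - eta - lam 0 i) * (lam 0 i + eta - lam 0 i) = - (eta * eta) by ring.
  have : 0 < \prod_(j | j != i) (('X - (lam 0 j)%:P).[lam 0 i - eta] *
                                 ('X - (lam 0 j)%:P).[lam 0 i + eta]).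
    apply: prodr_gt0 => j ji; rewrite !hornerXsubC.
    have -> : (lam 0 i - eta - lam 0 j) * (lam 0 i + eta - lam 0 j) =
      ((lam 0 i - lam 0 j) - eta) * ((lam 0 i - lam 0 j) + eta) by ring.
    by apply: pos_gap e0 _; apply: He; rewrite eq_sym.
  by move=> hp; rewrite mulNr oppr_lt0; apply: mulr_gt0 => //; apply: mulr_gt0.
exact: (cvgr_lt _ (cvgM (Hc _) (Hc _)) _ Hlim).
Qed.

End StepB.

Lemma gap_exists (R : realType) N (lam : 'rV[R]_N) :
  (forall i j : 'I_N, i != j -> lam 0 i != lam 0 j) ->
  exists2 g : R, 0 < g & forall i j, i != j -> g <= `|lam 0 i - lam 0 j|.
Proof.
move=> Hd.
exists (\big[Order.min/1]_(ij : 'I_N * 'I_N | ij.1 != ij.2) `|lam 0 ij.1 - lam 0 ij.2|).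
  apply: (big_ind (fun x : R => 0 < x)) => //.
    by move=> x y hx hy; rewrite lt_min hx hy.
  by move=> ij hij; rewrite normr_gt0 subr_eq0 Hd.
move=> i j ij.
exact: (@bigmin_le_cond _ _ _ 1 (i, j) (fun ij : 'I_N * 'I_N => ij.1 != ij.2)
  (fun ij => `|lam 0 ij.1 - lam 0 ij.2|) ij).
Qed.

Theorem main_pos (R : realType) (n : nat) (X : 'M[R]_n.+1) (lam : 'rV[R]_n.+1)
  (Qx : 'M[R]_n.+1) (d' : R) :
  is_symm X ->
  is_eigvals X lam ->
  (forall i j : 'I_n.+1, i != j -> lam 0 i != lam 0 j) ->
  0 < d' ->
  is_orth Qx ->
  X = Qx *m diag_mx lam *m Qx^T ->
  exists d'' : R, 0 < d'' /\
    (forall Y : 'M[R]_n.+1, ballX X d'' Y -> ballQL Qx lam d' Y).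
Proof.
move=> _ [Hni HE] Hd d0 [HQ1 HQ] HX.
have [g g0 Hg] := gap_exists Hd.
have [e e0 HA] := nearA HQ HX Hd d0.
pose eta := Num.min (e / 2) (g / 3).
have eta0 : 0 < eta by rewrite lt_min; apply/andP; split; apply: divr_gt0.
have etae : eta < e by rewrite /eta gt_min; apply/orP; left; lra.
have etag : 3 * eta <= g.
  have : eta <= g / 3 by rewrite /eta ge_min lexx orbT.
  lra.
have etag' : eta < g by lra.
have HB := nearB HE eta0 (fun i j ij => lt_le_trans etag' (Hg i j ij)).
have [r r0 Hr] := iffLR (nbhs_ballP X _) HB.
exists (Num.min e r / 2); split.
  by apply: divr_gt0 => //; rewrite lt_min e0 r0.
move=> Y [HY HYX].
have Hent i j : `|X i j - Y i j| < Num.min e r.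
  rewrite distrC; have := frob_entry (Y - X) i j; rewrite !mxE => h.
  apply: (le_lt_trans h); apply: (le_lt_trans HYX).
  have : 0 < Num.min e r by rewrite lt_min e0 r0.
  lra.
have Hsign : forall i, (char_poly Y).[lam 0 i - eta] * (char_poly Y).[lam 0 i + eta] < 0.
  apply: Hr; split => // i j.
  by have := Hent i j; rewrite lt_min => /andP [_ h].
have Hroot : forall i, exists m : R,
    lam 0 i - eta <= m <= lam 0 i + eta /\ (char_poly Y).[m] = 0.
  move=> i.
  have := Hsign i; set fa := (char_poly Y).[_]; set fb := (char_poly Y).[_] => hs.
  have hmm : Num.min fa fb <= 0 <= Num.max fa fb.
    have [ha|ha] := lerP fa 0.
      have hb : 0 <= fb by nra.
      by rewrite ge_min le_max ha hb !orbT.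
    have hb : fb <= 0 by nra.
    by rewrite ge_min le_max hb (ltW ha) !orbT.
  have [c hc hfc] := @IVT R (horner (char_poly Y)) (lam 0 i - eta) (lam 0 i + eta) 0
    ltac:(lra) (continuous_subspaceT (@continuous_horner R _)) hmm.
  by exists c; split => //; move: hc; rewrite in_itv.
have [muf Hmuf] := fin_all_exists Hroot.
pose mu := \row_i muf i.
have Hmu i : mu 0 i = muf i by rewrite mxE.
have lamlt (i j : 'I_n.+1) : (i < j)%N -> lam 0 j < lam 0 i.
  move=> ij; rewrite lt_def Hni ?(ltnW ij) // andbT.
  by apply: Hd; rewrite neq_ltn ij.
have mult (i j : 'I_n.+1) : (i < j)%N -> mu 0 j < mu 0 i.
  move=> ij; rewrite !Hmu.
  have [/andP [h1 h2] _] := Hmuf i; have [/andP [h3 h4] _] := Hmuf j.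
  have hl := lamlt i j ij.
  have hg := Hg i j ltac:(by rewrite neq_ltn ij).
  rewrite gtr0_norm ?subr_gt0 // in hg.
  lra.
have Hinj : injective (fun i => mu 0 i).
  move=> i j /= hij; apply/eqP; apply/negPn/negP => nij.
  move: nij; rewrite neq_ltn => /orP [ij|ji].
    by have := mult i j ij; rewrite hij ltxx.
  by have := mult j i ji; rewrite hij ltxx.
have Hmu_near j : `|lam 0 j - mu 0 j| < e.
  have [/andP [h1 h2] _] := Hmuf j; rewrite Hmu.
  rewrite ltr_norml.
  by apply/andP; split; lra.
have Hent' i j : `|X i j - Y i j| < e.
  by have := Hent i j; rewrite lt_min => /andP [h _].
have [Hs Hfrob Hvn] := HA Y mu Hent' Hmu_near.
have Hr0 i : (char_poly Y).[mu 0 i] = 0 by rewrite Hmu; case: (Hmuf i).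
have [HQb HYQ] := good HY Hr0 Hinj Hs (cc_neq0 Hd).
exists (Qbf Qx lam Y mu), mu; split.
- exact: ltW.
- exact: ltW.
- by split => //; apply: mulmx1C.
- move=> i j ij; rewrite leq_eqVlt in ij; case/orP: ij => [/eqP/val_inj -> //|ij].
  exact: ltW (mult i j ij).
- by rewrite -HYQ -mulmxA (mulmx1C HQb) mulmx1.
Qed.

Unset Implicit Arguments.
Set Strict Implicit.

Theorem lemma3 (R : realType) (n : nat) (X : 'M[R]_n) (lam : 'rV[R]_n)
  (Qx : 'M[R]_n) (d' : R) :
  is_symm X ->
  is_eigvals X lam ->
  (forall i j : 'I_n, i != j -> lam 0 i != lam 0 j) ->
  0 < d' ->
  is_orth Qx ->
  X = Qx *m diag_mx lam *m Qx^T ->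
  exists d'' : R, 0 < d'' /\
    (forall Y : 'M[R]_n, ballX X d'' Y -> ballQL Qx lam d' Y).
Proof.
move: X lam Qx; case: n => [|n] X lam Qx HS HE Hd d0 HQ HX; last exact: main_pos.
exists 1; split => // Y _; exists Qx, lam; split.
- by rewrite subrr frob0 ltW.
- by rewrite subrr vnorm_frob frob0 ltW.
- done.
- by case: HE.
- by apply/matrixP => -[].
Qed.
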